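(* Let $n,M\ge1$ be integers, $\mathcal X=\{x^{(1)},\dots,x^{(L)}\}\subset\mathbb C$ a set of $L$ channel input symbols, $\sigma^2>0$, $g:\mathbb C\to[0,+\infty]$ measurable, $\epsilon>0$, $B,\delta\in\mathbb R$. Let $\mathscr C$ be a homogeneous $(n,M,\epsilon,B,\delta)$-code (as defined in the context), let $p_\ell=\int_{\mathcal E_\ell}f_{Y|X}(y|x^{(\ell)})dy$ for $\ell=1,\dots,L$, assume $\sum_jp_j>0$, and let $Q(x^{(\ell)})=p_\ell/\sum_{j=1}^Lp_j$. Then $$\epsilon\ge1-\exp\Big(-nH(P_{\mathscr C})-nD(P_{\mathscr C}\|Q)+n\log\sum_{j=1}^Lp_j\Big).$$
   Context: Channel: outputs $\boldsymbol Y=\boldsymbol x+\boldsymbol N_1$, $\boldsymbol Z=\boldsymbol x+\boldsymbol N_2$, all noise components i.i.d. complex circularly symmetric Gaussian with real and imaginary parts of zero mean and variance $\sigma^2/2$; $f_{Y|X}(y|x)=\frac1{\pi\sigma^2}\exp(-|y-x|^2/\sigma^2)$, $f_{\boldsymbol Y|\boldsymbol X}(\boldsymbol y|\boldsymbol x)=\prod_tf_{Y|X}(y_t|x_t)$ (same for $\boldsymbol Z$). An $(n,M)$-code is $\mathscr C=\{(\boldsymbol u(i),\mathcal D_i)\}_{i=1}^M$ with $\boldsymbol u(i)\in\mathcal X^n$, $|u_t(i)|\le P$ for a fixed $P>0$, pairwise disjoint measurable $\mathcal D_i\subseteq\mathbb C^n$, $M\le2^{n\lfloor\log_2L\rfloor}$;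 decoding sets are of product form $\mathcal D_i=\mathcal D_{i,1}\times\cdots\times\mathcal D_{i,n}$, $\mathcal D_{i,t}\subseteq\mathbb C$ measurable. $\gamma_i(\mathscr C)=1-\int_{\mathcal D_i}f_{\boldsymbol Y|\boldsymbol X}(\boldsymbol y|\boldsymbol u(i))d\boldsymbol y$, $\gamma=\frac1M\sum_i\gamma_i$; $(n,M,\epsilon)$-code: $\gamma<\epsilon$. With $\bar g(\boldsymbol z)=\frac1n\sum_tg(z_t)$, $\theta_i=\Pr[\bar g(\boldsymbol Z)<B\mid\boldsymbol X=\boldsymbol u(i)]$, $\theta=\frac1M\sum_i\theta_i$; $(n,M,\epsilon,B,\delta)$-code: $(n,M,\epsilon)$-code with $\theta<\delta$. Types: $P_{\boldsymbol u(i)}(x^{(\ell)})=\frac1n\#\{t:u_t(i)=x^{(\ell)}\}$, $P_{\mathscr C}=\frac1M\sum_iP_{\boldsymbol u(i)}$. For each $\ell$, $\mathcal E_\ell=\mathcal D_{i^\star,t^\star}$ where $(i^\star,t^\star)$ minimizes $\int_{\mathcal D_{i,t}}f_{Y|X}(y|x^{(\ell)})dy$ over $\{1,\dots,M\}\times\{1,\dots,n\}$. The code is homogeneous if $P_{\boldsymbol u(i)}=P_{\mathscr C}$ for every $i$, and $\mathcal D_{i,t}=\mathcal E_\ell$ whenever $u_t(i)=x^{(\ell)}$. $H$ is entropy and $D(P\|Q)=\sum_xP(x)\log\frac{P(x)}{Q(x)}$ relative entropy, with natural logarithms. *)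

(* Defs.v *)
From HB Require Import structures.
From mathcomp Require Import all_boot all_order all_algebra.
From mathcomp Require Import all_classical all_reals all_analysis.
From mathcomp Require Import measurable_realfun lebesgue_integral_theory.lebesgue_integral.
Set Implicit Arguments. Unset Strict Implicit. Unset Printing Implicit Defensive.
Import Order.TTheory GRing.Theory Num.Theory.
Local Open Scope classical_set_scope.
Local Open Scope ring_scope.

(* The complex plane is modelled as R * R (real part, imaginary part),
   with Borel sigma-algebra of the product and Lebesgue measure on R^2. *)
Definition cplx (R : realType) := (R * R)%type.

Definition leb2 (R : realType) : set (R * R) -> \bar R :=
  (@lebesgue_measure R \x @lebesgue_measure R)%E.

Definition cnorm (R : realType) (c : R * R) : R := Num.sqrt (c.1 ^+ 2 + c.2 ^+ 2).
Definition csqdist (R : realType) (y x : R * R) : R :=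
  (y.1 - x.1) ^+ 2 + (y.2 - x.2) ^+ 2.

Definition dens (R : realType) (s2 : R) (x y : R * R) : R :=
  (pi * s2)^-1 * expR (- (csqdist y x / s2)).

Definition intC (R : realType) (s2 : R) (x : R * R) (A : set (R * R)) : \bar R :=
  (\int[(@leb2 R)]_(y in A) (dens s2 x y)%:E)%E.

(* Integral over C^n of h(y) * prod_t f(y_t | x_t), written as the iterated
   (Tonelli) integral: first coordinate outermost. *)
Fixpoint iint (R : realType) (s2 : R) (n : nat) :
    n.-tuple (R * R) -> (n.-tuple (R * R) -> \bar R) -> \bar R :=
  match n return n.-tuple (R * R) -> (n.-tuple (R * R) -> \bar R) -> \bar R with
  | 0 => fun _ h => h [tuple]
  | m.+1 => fun x h =>
      (\int[(@leb2 R)]_z ((dens s2 (thead x) z)%:E *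
         iint s2 (behead_tuple x) (fun w => h (cons_tuple z w))))%E
  end.

Definition PrCh (R : realType) (s2 : R) (n : nat) (x : n.-tuple (R * R))
    (A : set (n.-tuple (R * R))) : R :=
  fine (iint s2 x (fun z => (\1_A z : R)%:E)).

Definition prodset (R : realType) (n : nat) (Dt : 'I_n -> set (R * R)) :
    set (n.-tuple (R * R)) := [set y | forall t, Dt t (tnth y t)].

Definition is_code (R : realType) (L : nat) (xs : 'I_L -> R * R) (P : R)
    (n M : nat) (u : 'I_M -> n.-tuple (R * R)) (D : 'I_M -> 'I_n -> set (R * R)) :=
  [/\ forall i t, exists l, tnth (u i) t = xs l,
      forall i t, cnorm (tnth (u i) t) <= P,
      forall i t, measurable (D i t),
      forall i j, i != j -> prodset (D i) `&` prodset (D j) = set0 &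
      (M <= 2 ^ (n * trunc_log 2 L))%N].

Definition gamma_i (R : realType) (s2 : R) (n M : nat) (u : 'I_M -> n.-tuple (R * R))
    (D : 'I_M -> 'I_n -> set (R * R)) (i : 'I_M) : R :=
  1 - PrCh s2 (u i) (prodset (D i)).

Definition gamma (R : realType) (s2 : R) (n M : nat) (u : 'I_M -> n.-tuple (R * R))
    (D : 'I_M -> 'I_n -> set (R * R)) : R :=
  M%:R^-1 * \sum_(i < M) gamma_i s2 u D i.

Definition gbar (R : realType) (n : nat) (g : R * R -> \bar R) (z : n.-tuple (R * R)) : \bar R :=
  ((n%:R^-1)%:E * \sum_(t < n) g (tnth z t))%E.

Definition theta_i (R : realType) (s2 : R) (g : R * R -> \bar R) (B : R) (n M : nat)
    (u : 'I_M -> n.-tuple (R * R)) (i : 'I_M) : R :=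
  PrCh s2 (u i) [set z | (gbar g z < B%:E)%E].

Definition theta (R : realType) (s2 : R) (g : R * R -> \bar R) (B : R) (n M : nat)
    (u : 'I_M -> n.-tuple (R * R)) : R :=
  M%:R^-1 * \sum_(i < M) theta_i s2 g B u i.

Definition is_code_eBd (R : realType) (L : nat) (xs : 'I_L -> R * R) (P s2 : R)
    (g : R * R -> \bar R) (eps B delta : R)
    (n M : nat) (u : 'I_M -> n.-tuple (R * R)) (D : 'I_M -> 'I_n -> set (R * R)) :=
  [/\ is_code xs P u D, gamma s2 u D < eps & theta s2 g B u < delta].

Definition ctype (R : realType) (L : nat) (xs : 'I_L -> R * R) (n M : nat)
    (u : 'I_M -> n.-tuple (R * R)) (i : 'I_M) (l : 'I_L) : R :=
  n%:R^-1 * #|[set t : 'I_n | tnth (u i) t == xs l]|%:R.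

Definition codetype (R : realType) (L : nat) (xs : 'I_L -> R * R) (n M : nat)
    (u : 'I_M -> n.-tuple (R * R)) (l : 'I_L) : R :=
  M%:R^-1 * \sum_(i < M) ctype xs u i l.

Definition is_E (R : realType) (s2 : R) (x : R * R) (n M : nat)
    (D : 'I_M -> 'I_n -> set (R * R)) (E : set (R * R)) :=
  exists i0 t0, E = D i0 t0 /\
    forall i t, (intC s2 x (D i0 t0) <= intC s2 x (D i t))%E.

Definition homogeneous (R : realType) (L : nat) (xs : 'I_L -> R * R) (s2 : R)
    (n M : nat) (u : 'I_M -> n.-tuple (R * R)) (D : 'I_M -> 'I_n -> set (R * R))
    (E : 'I_L -> set (R * R)) :=
  [/\ forall l, is_E s2 (xs l) D (E l),
      forall i l, ctype xs u i l = codetype xs u l &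
      forall i t l, tnth (u i) t = xs l -> D i t = E l].

Definition entropy (R : realType) (L : nat) (p : 'I_L -> R) : R :=
  - \sum_(l < L) (if p l == 0 then 0 else p l * ln (p l)).

Definition relent (R : realType) (L : nat) (p q : 'I_L -> R) : \bar R :=
  \big[+%E/0%E]_(l < L) (if p l == 0 then 0%E
                 else if q l == 0 then +oo%E
                 else ((p l * ln (p l / q l))%:E)).

(* Main.v *)
Require Import Defs.
From HB Require Import structures.
From mathcomp Require Import all_boot all_order all_algebra.
From mathcomp Require Import all_classical all_reals all_analysis.
From mathcomp Require Import measurable_realfun lebesgue_integral_theory.lebesgue_integral.
From mathcomp Require Import ring lra.
Import Order.TTheory GRing.Theory Num.Theory.
Local Open Scope classical_set_scope.
Local Open Scope ring_scope.
Definition mu2 (R : realType) := (@lebesgue_measure R \x @lebesgue_measure R)%E.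
HB.instance Definition _ (R : realType) :=
  isMeasure.Build _ (R * R)%type R (@leb2 R) (measure0 (mu2 R)) (measure_ge0 (mu2 R))
    (@measure_semi_sigma_additive _ _ _ (mu2 R)).
Section L.
Variable R : realType.
Variable s2 : R.
Hypothesis s2gt0 : 0 < s2.

Lemma dens_ge0 x y : 0 <= dens s2 x y.
Proof. rewrite /dens mulr_ge0 ?expR_ge0 // invr_ge0 mulr_ge0 // ?pi_ge0 // ltW //. Qed.

Lemma measurable_dens x : measurable_fun setT (dens s2 x).
Proof.
rewrite /dens /csqdist.
apply: measurable_funM; first exact: measurable_cst.
apply: measurableT_comp; first exact: measurable_expR.
apply: measurable_funN.
apply: measurable_funM; last exact: measurable_cst.
apply: measurable_funD.
  apply: measurable_funX; apply: measurable_funB; [exact: measurable_fst | exact: measurable_cst].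
apply: measurable_funX; apply: measurable_funB; [exact: measurable_snd | exact: measurable_cst].
Qed.

Lemma iintS n (x : n.+1.-tuple (R * R)) h : iint s2 x h =
  (\int[@leb2 R]_z ((dens s2 (thead x) z)%:E *
         iint s2 (behead_tuple x) (fun w => h (cons_tuple z w))))%E.
Proof. by []. Qed.

Lemma iint0 {n} (x : n.-tuple (R * R)) : iint s2 x (fun _ => 0%E) = 0%E.
Proof.
elim: n x => [//|n IH] x.
rewrite iintS.
under eq_integral do rewrite IH mule0.
exact: integral0.
Qed.

Lemma intC_ge0 x A : (0 <= intC s2 x A)%E.
Proof. apply: integral_ge0 => y _; rewrite lee_fin; exact: dens_ge0. Qed.

Lemma iint_prod n (x : n.-tuple (R * R)) (Dt : 'I_n -> set (R * R)) :
  (forall t, measurable (Dt t)) ->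
  iint s2 x (fun z => (\1_(prodset Dt) z)%:E) =
  (\big[*%E/1%E]_(t < n) intC s2 (tnth x t) (Dt t))%E.
Proof.
elim: n x Dt => [|n IH] x Dt mD.
  rewrite big_ord0 /= indicE; congr (_%:E).
  by rewrite (_ : [tuple] \in prodset Dt) // inE => -[].
rewrite iintS big_ord_recl.
set c := (\big[*%E/1%E]_(i < n) _)%E.
have inner z : iint s2 (behead_tuple x)
    (fun w => (\1_(prodset Dt) (cons_tuple z w))%:E) =
    ((\1_(Dt ord0) z)%:E * c)%E.
  have [Dz|nDz] := boolP (z \in Dt ord0).
    rewrite indicE Dz mul1e.
    have -> : (fun w : n.-tuple (R * R) => (\1_(prodset Dt) (cons_tuple z w) : R)%:E) =
       (fun w => (\1_(prodset (fun t => Dt (lift ord0 t))) w : R)%:E).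
      apply: boolp.funext => w; rewrite !indicE; congr ((_ : bool)%:R%:E).
      apply/idP/idP; rewrite !inE.
        by move=> H t; have := H (lift ord0 t); rewrite tnthS.
      move=> H t; case: (unliftP ord0 t) => [t'|] ->.
        by rewrite tnthS.
      by rewrite tnth0; move: Dz; rewrite inE.
    rewrite IH; last by move=> t; exact: mD.
    rewrite /c; apply: eq_bigr => t _; congr intC.
    by rewrite tnth_behead; congr tnth; apply: val_inj => /=; rewrite inordK // ltnS.
  rewrite indicE (negbTE nDz) mul0e.
  rewrite -(iint0 (behead_tuple x : n.-tuple _)); congr iint.
  apply: boolp.funext => w; rewrite indicE.
  case: (boolP (_ \in prodset Dt)) => // H; exfalso; move: H nDz; rewrite !inE => H.
  by have := H ord0; rewrite tnth0 => HH; apply/negP; apply/negPn; apply/mem_set.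
transitivity (\int[@leb2 R]_z (((dens s2 (thead x) z)%:E * (\1_(Dt ord0) z : R)%:E) * c))%E.
  by apply: eq_integral => z _; rewrite inner muleA; reflexivity.
have c0 : (0 <= c)%E.
  rewrite /c; elim/big_ind: _ => //; [by move=> a b; exact: mule_ge0|].
  by move=> t _; exact: intC_ge0.
have mf : measurable_fun setT
   (fun z => ((dens s2 (thead x) z)%:E * (\1_(Dt ord0) z : R)%:E)%E).
  apply: emeasurable_funM; first by apply: measurableT_comp => //; exact: measurable_dens.
  by apply: measurableT_comp => //; exact: measurable_indic.
have f0 : forall z, setT z -> (0 <= ((dens s2 (thead x) z)%:E * (\1_(Dt ord0) z : R)%:E))%E.
  by move=> y _; apply: mule_ge0; rewrite lee_fin ?dens_ge0.
have HZ := @ge0_integralZr _ _ _ (@leb2 R) setT measurableT _ mf c f0 c0.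
etransitivity; first exact: HZ.
congr (_ * _)%E.
rewrite /intC [in RHS]integral_mkcond. apply: eq_integral => y _.
rewrite /restrict indicE; case: ifP => _; rewrite ?mule1 ?mule0; reflexivity.
Qed.

Lemma fineM_ge0 (a b : \bar R) : (0 <= a)%E -> (0 <= b)%E -> fine (a * b)%E = fine a * fine b.
Proof.
move=> ha hb.
have [->|a0] := eqVneq a 0%E; first by rewrite mul0e /= mul0r.
have [->|b0] := eqVneq b 0%E; first by rewrite mule0 /= mulr0.
have a0' : (0 < a)%E by rewrite lt_neqAle eq_sym a0 ha.
have b0' : (0 < b)%E by rewrite lt_neqAle eq_sym b0 hb.
case: a a0' {ha a0} => [r||] ra; case: b b0' {hb b0} => [s||] sb //=.
all: by rewrite ?gt0_muley ?gt0_mulye ?mulyy //= ?mulr0 ?mul0r.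
Qed.

Lemma fine_prod n (F : 'I_n -> \bar R) : (forall i, 0 <= F i)%E ->
  fine (\big[*%E/1%E]_(i < n) F i) = \prod_(i < n) fine (F i).
Proof.
elim: n F => [|n IH] F F0; first by rewrite !big_ord0.
rewrite !big_ord_recl fineM_ge0; [by rewrite IH | exact: F0 |].
apply: (big_ind (fun x => 0 <= x)%E); [exact: lee01 | by move=> a b; exact: mule_ge0 | by move=> i _; exact: F0].
Qed.

Lemma PrCh_prod n (x : n.-tuple (R * R)) (Dt : 'I_n -> set (R * R)) :
  (forall t, measurable (Dt t)) ->
  PrCh s2 x (prodset Dt) = \prod_(t < n) fine (intC s2 (tnth x t) (Dt t)).
Proof.
move=> mD; rewrite /PrCh iint_prod // fine_prod // => t; exact: intC_ge0.
Qed.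
End L.

Theorem corollary2 (R : realType) (n M L : nat) (xs : 'I_L -> R * R) (P s2 : R)
    (g : R * R -> \bar R) (eps B delta : R)
    (u : 'I_M -> n.-tuple (R * R)) (D : 'I_M -> 'I_n -> set (R * R))
    (E : 'I_L -> set (R * R)) :
  (0 < n)%N -> (0 < M)%N -> injective xs -> 0 < P -> 0 < s2 ->
  measurable_fun setT g -> 0 < eps ->
  is_code_eBd xs P s2 g eps B delta u D ->
  homogeneous xs s2 u D E ->
  let p := fun l => fine (intC s2 (xs l) (E l)) in
  let S := \sum_(j < L) p j in
  0 < S ->
  let Q := fun l => p l / S in
  let PC := codetype xs u in
  (1 - expeR (- (n%:R * entropy PC)%:E - n%:R%:E * relent PC Q
              + (n%:R * ln S)%:E) <= eps%:E)%E.
Proof.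
move=> n0 M0 inj P0 s0 mg eps0 [[Hsym Hamp Hmeas Hdisj HM] Hgam Hth] [HE Hct HD] p Ssum S0.
cbv zeta; set PC := codetype xs u; set Q := fun l => p l / Ssum.
pose c i l := #|[set t : 'I_n | tnth (u i) t == xs l]|.
have nR0 : (n%:R : R) != 0 by rewrite pnatr_eq0 -lt0n.
have p_ge0 : forall l, 0 <= p l.
  by move=> l; rewrite /p; apply: fine_ge0; exact: intC_ge0.
have Hc : forall i l, (c i l)%:R = n%:R * PC l.
  by move=> i l; rewrite /PC -(Hct i l) /ctype mulrA mulfV ?mul1r.
pose i0 : 'I_M := Ordinal M0.
have Hcc : forall i l, c i l = c i0 l.
  by move=> i l; apply/eqP; rewrite -(eqr_nat R) Hc Hc.
have lab_ex : forall i, exists f : 'I_n -> 'I_L, forall t, tnth (u i) t = xs (f t).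
  by move=> i; case: (choice (Hsym i)) => f Hf; exists f.
have c_lab : forall i (f : 'I_n -> 'I_L), (forall t, tnth (u i) t = xs (f t)) ->
    forall l, c i l = #|[pred t | f t == l]|.
  move=> i f Hf l; apply: eq_card => t; rewrite [RHS]inE; apply/idP/idP.
    by rewrite in_setE /= Hf (inj_eq inj).
  by move=> H; rewrite in_setE /= Hf (inj_eq inj).
have HPr : forall i, PrCh s2 (u i) (prodset (D i)) = \prod_l p l ^+ c i l.
  move=> i; have [f Hf] := lab_ex i.
  rewrite PrCh_prod; try exact: s0; last by move=> t; exact: Hmeas.
  rewrite (eq_bigr (fun t => p (f t))); last first.
    by move=> t _; rewrite /p (HD i t (f t) (Hf t)) Hf.
  rewrite (partition_big f predT) //=.
  apply: eq_bigr => l _.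
  rewrite (c_lab i f Hf l) -prodr_const.
  by apply: eq_big => [t|t /eqP ->] //; rewrite !inE.
pose Pi := \prod_l p l ^+ c i0 l.
have Hg : gamma s2 u D = 1 - Pi.
  rewrite /gamma (eq_bigr (fun=> 1 - Pi)); last first.
    move=> i _; rewrite /gamma_i HPr /Pi; congr (1 - _).
    by apply: eq_bigr => l _; rewrite Hcc.
  rewrite sumr_const card_ord -[(1 - Pi) *+ M]mulr_natl mulrA mulVf ?mul1r //.
  by rewrite pnatr_eq0 -lt0n.
have key : 1 - Pi < eps by rewrite -Hg.
have PC_ge0 : forall l, 0 <= PC l.
  move=> l; have := Hc i0 l => H.
  have : 0 <= (n%:R : R) * PC l by rewrite -H.
  by rewrite pmulr_rge0 // ltr0n.
have HsumPC : \sum_l PC l = 1.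
  have [f Hf] := lab_ex i0.
  have hs : (\sum_l c i0 l = n)%N.
    rewrite (eq_bigr (fun l => #|[pred t | f t == l]|)); last by move=> l _; exact: c_lab.
    rewrite -[RHS]card_ord -sum1_card (partition_big f predT) //=.
    apply: eq_bigr => l _; rewrite -sum1_card.
    by apply: eq_bigl => t; rewrite !inE.
  apply: (mulfI nR0); rewrite mulr_sumr mulr1.
  under eq_bigr do rewrite -(Hc i0).
  by rewrite -natr_sum hs.
case: (boolP [exists l, (PC l != 0) && (p l == 0)]) => [/existsP [l /andP [PCl pl]] | Hno].
  have Pi0 : Pi = 0.
    apply/eqP/prodf_eq0; exists l => //.
    have cl : (c i0 l != 0)%N.
      by rewrite -(pnatr_eq0 R) Hc mulf_neq0.
    by rewrite (eqP pl) expr0n (negbTE cl).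
  move: key; rewrite Pi0 subr0 => key.
  apply: le_trans (_ : 1%E <= _)%E; last by rewrite lee_fin ltW.
  apply: geeDl; rewrite oppe_le0; exact: expeR_ge0.
have Hno' : forall l, PC l != 0 -> 0 < p l.
  move=> l PCl; rewrite lt_neqAle p_ge0 andbT eq_sym.
  apply/negP => pl; move/existsP: Hno; apply; exists l; by rewrite PCl pl.
pose rel := \sum_l (if PC l == 0 then 0 else PC l * ln (PC l / Q l)).
have relE : relent PC Q = rel%:E.
  rewrite /relent /rel -sumEFin; apply: eq_bigr => l _.
  case: ifP => // /negbT PCl; rewrite ifF //; apply/negbTE.
  by rewrite /Q mulf_neq0 ?invr_eq0 ?gt_eqF // Hno'.
rewrite relE -EFinM -EFinN -[1%E]/(1%:E) -EFinD lee_fin.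
apply: le_trans (ltW key); rewrite lerD2l lerN2.
suff -> : - (n%:R * entropy PC) - n%:R * rel + n%:R * ln Ssum =
    \sum_l (if PC l == 0 then 0 else (c i0 l)%:R * ln (p l)).
  rewrite expR_sum /Pi le_eqVlt; apply/orP; left; apply/eqP; apply: eq_bigr => l _.
  case: ifP => [/eqP PCl|/negbT PCl].
    have : (c i0 l)%:R = 0 :> R by rewrite Hc PCl mulr0.
    by move/eqP; rewrite pnatr_eq0 => /eqP ->; rewrite expR0 expr0.
  by rewrite expRM_natl lnK // posrE Hno'.
have lnS : ln Ssum = \sum_l PC l * ln Ssum by rewrite -mulr_suml HsumPC mul1r.
rewrite /entropy /rel lnS.
rewrite -[X in X = _](_ : n%:R * \sum_l ((if PC l == 0 then 0 else PC l * ln (PC l))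
    - (if PC l == 0 then 0 else PC l * ln (PC l / Q l)) + PC l * ln Ssum) = _); last first.
  rewrite big_split sumrB /=; ring.
rewrite mulr_sumr.
apply: eq_bigr => l _.
case: ifP => [/eqP ->|/negbT PCl]; first by rewrite mul0r subr0 addr0 mulr0.
have PCp : 0 < PC l by rewrite lt_neqAle eq_sym PCl PC_ge0.
have pp := Hno' l PCl.
rewrite /Q ln_div ?posrE ?divr_gt0 // ln_div ?posrE //.
by rewrite Hc; ring.
Qed.
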